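(* Let $n\ge 2$. Then $n$ is prime if and only if the only rank-$2$ matroid on the ground set $\mathbb{Z}_n$ whose set of bases is invariant under the translation action of $\mathbb{Z}_n$ is the uniform matroid $U_{2,n}$; equivalently, iff $\mathbb{B}[\mathbb{Z}_n]$ has exactly one two-dimensional tropical subrepresentation, the one corresponding to $U_{2,n}$.
   Context: $\mathbb{Z}_n$ acts on $\binom{\mathbb{Z}_n}{2}$ by $g\cdot\{a,b\}=\{g+a,g+b\}$. Two-dimensional tropical subrepresentations of the boolean regular representation $\mathbb{B}[\mathbb{Z}_n]$ are equivalent to rank-$2$ matroids on ground set $\mathbb{Z}_n$ with basis set invariant under this action. *)

(* Defs.v *)
From HB Require Import structures.
From mathcomp Require Import all_boot all_order all_algebra.
Set Implicit Arguments. Unset Strict Implicit. Unset Printing Implicit Defensive.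
Import GRing.Theory.
Local Open Scope ring_scope.

Definition is_matroid_bases (T : finType) (B : {set {set T}}) : Prop :=
  B != set0 /\
  forall A1 A2, A1 \in B -> A2 \in B ->
    forall x, x \in A1 :\: A2 ->
      exists2 y, y \in A2 :\: A1 & (y |: (A1 :\ x)) \in B.

Definition is_rank2_matroid (T : finType) (B : {set {set T}}) : Prop :=
  is_matroid_bases B /\ forall A, A \in B -> #|A| = 2%N.

Definition translation_invariant (V : finZmodType) (B : {set {set V}}) : Prop :=
  forall (g : V) (A : {set V}), A \in B -> [set g + a | a in A] \in B.

Definition uniform2_bases (T : finType) : {set {set T}} :=
  [set A : {set T} | #|A| == 2%N].

(* Main.v *)
Require Import Defs.
From mathcomp Require Import all_boot all_order all_algebra.
Import GRing.Theory.
Local Open Scope ring_scope.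

Section Gen.
Variable V : finZmodType.
Variable B : {set {set V}}.
Hypothesis HB : is_rank2_matroid B.
Hypothesis HT : translation_invariant B.

Lemma tr2 (g a b : V) : [set g + x | x in [set a; b]] = [set g + a; g + b].
Proof. by rewrite imsetU1 imset_set1. Qed.

Lemma shiftB (a b : V) : ([set a; b] \in B) = ([set 0; b - a] \in B).
Proof.
apply/idP/idP => H.
- have := HT (- a) _ H; rewrite tr2 addNr; by rewrite addrC.
- have := HT a _ H; rewrite tr2 addr0 addrC subrK; done.
Qed.

Lemma inbasis (y : V) : exists w, w != y /\ [set y; w] \in B.
Proof.
case: HB => [[/set0Pn [A0 HA0] _] Hc].
have /eqP/cards2P [p [q [pq EA]]] := Hc _ HA0.
exists (y - p + q); split.
  apply/negP => /eqP E; move: pq; rewrite -{2}(subrK p y) in E.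
  by move/addrI: E => ->; rewrite eqxx.
have := HT (y - p) _ HA0; rewrite EA tr2 subrK; done.
Qed.

Lemma set2C (x y : V) : [set x; y] = [set y; x].
Proof. by rewrite /= setUC. Qed.

Lemma transB (x y z : V) : x != y -> y != z -> x != z ->
  [set x; y] \notin B -> [set y; z] \notin B -> [set x; z] \notin B.
Proof.
move=> xy yz xz Hxy Hyz; apply/negP => Hxz.
have [w [wy Hw]] := inbasis y.
case: HB => [[_ Hex] _].
have wA : w \in [set y; w] :\: [set x; z].
  rewrite !inE eqxx orbT andbT negb_or; apply/andP; split.
    by apply/negP => /eqP E; move: Hxy; rewrite -E set2C Hw.
  by apply/negP => /eqP E; move: Hyz; rewrite -E Hw.
have [y' Hy' Hin] := Hex _ _ Hw Hxz w wA.
have E : [set y; w] :\ w = [set y].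
  apply/setP => u; rewrite !inE; have [->|_] := eqVneq u w; by rewrite /= ?orbF ?(negbTE wy).
move: Hin; rewrite E; move: Hy'; rewrite !inE => /andP [_ /orP [] /eqP ->].
  by move/negP: Hxy.
by rewrite set2C; move/negP: Hyz.
Qed.

Definition H (e : V) := (e == 0) || ([set 0; e] \notin B).

Lemma HD e f : H e -> H f -> H (e + f).
Proof.
rewrite /H.
have [->|e0] := eqVneq e 0; first by rewrite add0r.
have [E|f0] := eqVneq f 0; first by rewrite E addr0 (negbTE e0).
have [_|ef0] := eqVneq (e + f) 0; first by move=> _ _.
move=> /= He Hf; apply: (@transB 0 e (e + f)) => //.
- by rewrite eq_sym.
- apply/negP => /eqP E; move: f0; rewrite -{1}(addr0 e) in E.
  by move/addrI: E => ->; rewrite eqxx.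
- by rewrite eq_sym.
- by rewrite shiftB addrAC subrr add0r.
Qed.

Lemma HMn d k : H d -> H (d *+ k).
Proof.
move=> Hd; elim: k => [|k IH]; first by rewrite mulr0n /H eqxx.
by rewrite mulrS; apply: HD.
Qed.

End Gen.

Lemma Zp_gen (n : nat) (pn : prime n) (d w : 'Z_n) : d != 0 -> exists k, w = d *+ k.
Proof.
move=> d0.
have n1 : (1 < n)%N by apply: prime_gt1.
have ud : d \is a GRing.unit.
  rewrite -(natr_Zp d) unitZpE // prime_coprime //.
  apply/negP => /dvdn_leq.
  have dpos : (0 < val d)%N by rewrite lt0n; apply/negP => /eqP E; move: d0; rewrite -val_eqE /= E.
  have dn : (val d < n)%N by have := ltn_ord d; rewrite {2}Zp_cast.
  move=> /(_ dpos) h2; move: (leq_trans dn h2); by rewrite ltnn.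
exists (val (d^-1 * w)).
by rewrite -mulr_natr natr_Zp mulrA divrr // mul1r.
Qed.

Lemma prime_dir (n : nat) (pn : prime n) (B : {set {set 'Z_n}}) :
  is_rank2_matroid B -> translation_invariant B -> B = uniform2_bases 'Z_n.
Proof.
move=> HB HT.
apply/setP => A; rewrite inE; apply/idP/idP.
  by move=> HA; apply/eqP; exact: HB.2 _ HA.
case/cards2P => [a [b [ab ->]]]; apply/negPn/negP => Hn.
have Hd : H _ B (b - a) by rewrite /H -(@shiftB _ B HT) Hn orbT.
have d0 : b - a != 0 by rewrite subr_eq0 eq_sym.
have [w [w0 Hw]] := @inbasis _ B HB HT 0.
have [k Ek] := @Zp_gen n pn _ w d0.
have := @HMn _ B HB HT _ k Hd; rewrite -Ek /H (negbTE w0) Hw.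
done.
Qed.
Lemma valD n (g a : 'Z_n) : (1 < n)%N -> val (g + a) = ((val g + val a) %% n)%N.
Proof. move=> n1 /=. by congr modn; exact: Zp_cast. Qed.
Lemma val1 n : (1 < n)%N -> val (1 : 'Z_n) = 1%N.
Proof. move=> n1 /=. by rewrite modn_small. Qed.
Lemma val0 n : val (0 : 'Z_n) = 0%N.
Proof. by []. Qed.

Section Conv.
Variables (n m : nat).
Hypotheses (n1 : (1 < n)%N) (m1 : (1 < m)%N) (mn : (m < n)%N) (mdn : (m %| n)%N).

Definition fm (a : 'Z_n) := (val a %% m)%N.

Definition Bm : {set {set 'Z_n}} :=
  [set A : {set 'Z_n} | [exists a, exists b, (A == [set a; b]) && (fm a != fm b)]].

Lemma inBm A : reflect (exists a b, A = [set a; b] /\ fm a != fm b) (A \in Bm).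
Proof.
rewrite inE; apply: (iffP idP).
  by case/existsP => a /existsP [b /andP [/eqP -> h]]; exists a, b.
by case=> a [b [-> h]]; apply/existsP; exists a; apply/existsP; exists b; rewrite eqxx.
Qed.

Lemma fmD g a : fm (g + a) = ((val g + val a) %% m)%N.
Proof. by rewrite /fm valD // modn_dvdm. Qed.

Lemma pick_other A x : A \in Bm -> x \in A ->
  exists x', A = [set x; x'] /\ fm x != fm x'.
Proof.
case/inBm => a [b [-> h]]; rewrite !inE => /orP [] /eqP ->.
  by exists b.
by exists a; split; [rewrite /= setUC | rewrite eq_sym].
Qed.

Lemma Bm_rank2 : is_rank2_matroid Bm.
Proof.
split; last first.
  move=> A /inBm [a [b [-> h]]]; rewrite cards2.
  suff -> : a != b by [].
  by apply: contraNneq h => ->.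
split.
  apply/set0Pn; exists [set 0; 1]; apply/inBm; exists 0, 1; split => //.
  by rewrite /fm val0 val1 // mod0n modn_small.
move=> A1 A2 H1 H2 x; rewrite inE => /andP [xA2 xA1].
have [x' [E1 hx]] := pick_other _ _ H1 xA1.
case/inBm: H2 xA2 => [c [d [E2 hcd]]] xA2.
have Ex : A1 :\ x = [set x'].
  rewrite E1; apply/setP => u; rewrite !inE.
  have [->|_] := eqVneq u x; last by [].
  by apply/esym/negbTE; apply: contraNneq hx => ->.
have key : forall y, y \in A2 -> fm y != fm x' ->
    exists2 y0, y0 \in A2 :\: A1 & y0 |: (A1 :\ x) \in Bm.
  move=> y yA2 hy; exists y.
    rewrite inE yA2 andbT E1 !inE negb_or; apply/andP; split.
      by apply: contraNneq xA2 => <-.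
    by apply: contraNneq hy => ->.
  by rewrite Ex; apply/inBm; exists y, x'.
have [e1|ne] := eqVneq (fm c) (fm x').
  apply: (key d); first by rewrite E2 !inE eqxx orbT.
  by rewrite -e1 eq_sym.
by apply: (key c) => //; rewrite E2 !inE eqxx.
Qed.

Lemma Bm_inv : translation_invariant Bm.
Proof.
move=> g A /inBm [a [b [-> h]]]; apply/inBm; exists (g + a), (g + b).
split; first by rewrite tr2.
rewrite !fmD; apply: contra h => /eqP E.
by apply/eqP; rewrite /fm; apply/eqP; rewrite -(eqn_modDl (val g)) E.
Qed.

Lemma Bm_ne : Bm <> uniform2_bases 'Z_n.
Proof.
have vc : (m%:R : 'Z_n) = m :> nat by rewrite val_Zp_nat // modn_small.
move=> E.
have : [set 0; m%:R] \in uniform2_bases 'Z_n.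
  rewrite inE cards2.
  suff -> : (0 : 'Z_n) != m%:R by [].
  apply/negP => /eqP E0; have := vc; rewrite -E0 /= => m0.
  by move: m1; rewrite -m0.
rewrite -E => /inBm [a [b [Eab h]]].
have hfin : forall y, y \in [set (0 : 'Z_n); m%:R] -> fm y = 0%N.
  move=> y; rewrite !inE => /orP [] /eqP ->; rewrite /fm ?val0 ?vc ?mod0n ?modnn //.
  by rewrite [X in (X %% _)%N]vc modnn.
move: h; rewrite !hfin ?eqxx // Eab !inE eqxx ?orbT //.
Qed.

End Conv.

Theorem mainTheorem6 (n : nat) (hn : (1 < n)%N) :
  prime n <->
  (forall B : {set {set 'Z_n}},
     is_rank2_matroid B -> translation_invariant B -> B = uniform2_bases 'Z_n).
Proof.
split; first by move=> pn B; apply: prime_dir.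
move=> Hall; apply/negPn/negP => np.
set m := pdiv n.
have m1 : (1 < m)%N by apply: prime_gt1; apply: pdiv_prime.
have mdn : (m %| n)%N by apply: pdiv_dvd.
have mn : (m < n)%N.
  rewrite ltn_neqAle pdiv_leq ?andbT; last by apply: ltnW.
  by apply: contra np => /eqP <-; apply: pdiv_prime.
apply: (@Bm_ne n m hn m1 mn).
apply: Hall; [exact: Bm_rank2 | exact: Bm_inv].
Qed.
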